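(* Let $f\ge 0$, $n=3f+1$, and let nodes $v_0,\dots,v_{n-1}$ be given, of which exactly $f$ are byzantine and the remaining $2f+1$ honest. Let the creator of round $r\in\mathbb{Z}_{\ge 0}$ be $v_{r\bmod n}$. Then among any $n+2$ consecutive rounds there exist three consecutive rounds whose creators are all honest. *)

(* Defs.v *)
From mathcomp Require Import all_boot.
Set Implicit Arguments. Unset Strict Implicit. Unset Printing Implicit Defensive.

(* Nodes v_0..v_{n-1} are the elements of 'I_n (n > 0).
   The creator of round r is v_(r mod n). *)
Definition creator (n : nat) (r : nat) : 'I_n.+1 := inord (r %% n.+1).

(* Main.v *)
Require Import Defs.
From mathcomp Require Import all_boot.
From mathcomp Require Import zify.

Lemma sum_window (n t : nat) (byz : {set 'I_n.+1}) :
  \sum_(k < n.+1) ((creator n (t + k) \in byz) : nat) = #|byz|.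
Proof.
pose g (k : 'I_n.+1) : 'I_n.+1 := inord ((t + k) %% n.+1).
have ginj : injective g.
  move=> a b; rewrite /g => /(congr1 (@nat_of_ord _)); rewrite !inordK ?ltn_pmod // => /eqP.
  rewrite eqn_modDl !modn_small // => /eqP H; exact: val_inj.
have -> : \sum_(k < n.+1) ((creator n (t + k) \in byz) : nat)
          = \sum_(k < n.+1) ((g k \in byz) : nat) by [].
rewrite -(reindex_inj (P := predT) (F := fun i : 'I_n.+1 => ((i \in byz) : nat)) ginj) /=.
rewrite -sum1_card [in RHS]big_mkcond /=; apply: eq_bigr => i _; by case: (i \in byz).
Show.
Qed.

Theorem lemma12 (f : nat) (byz : {set 'I_(3 * f).+1}) :
  #|byz| = f ->
  forall s : nat,
  exists k : nat, k + 2 <= (3 * f).+1 + 1 /\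
    [/\ creator (3 * f) (s + k) \notin byz,
        creator (3 * f) (s + k + 1) \notin byz &
        creator (3 * f) (s + k + 2) \notin byz].
Proof.
move=> Hc s.
case: (boolP [exists k : 'I_(3 * f).+1, [&& creator (3 * f) (s + k) \notin byz,
        creator (3 * f) (s + k + 1) \notin byz &
        creator (3 * f) (s + k + 2) \notin byz]]).
  move=> /existsP [k /and3P [H1 H2 H3]]; exists k; split => //.
  have := ltn_ord k; lia.
rewrite negb_exists => /forallP Hn.
have Hle : \sum_(k < (3 * f).+1) 1 <= \sum_(k < (3 * f).+1)
   (((creator (3 * f) ((s + k)) \in byz) : nat) +
    ((creator (3 * f) ((s + 1) + k) \in byz) : nat) +
    ((creator (3 * f) ((s + 2) + k) \in byz) : nat)).
  apply: leq_sum => k _; have := Hn k.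
  rewrite (addnAC s 1 k) (addnAC s 2 k).
  by case: (creator _ (s + k) \in byz); case: (creator _ (s + k + 1) \in byz);
     case: (creator _ (s + k + 2) \in byz).
move: Hle; rewrite !big_split /= !sum_window sum1_card card_ord Hc; lia.
Qed.
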